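(* Let $A$ be a sparse matrix whose columns are partitioned into consecutive groups $Q_1,\dots,Q_K$, each of width at most $\Delta_W$ (a regular partition of width $\Delta_W$). Let $\tau\in(0,1]$. Let $G$ consist of rows $v_0,\dots,v_{h-1}$ of $A$, merged into one group by the 1-SA algorithm in this order using Jaccard similarity threshold $\tau$; that is, writing $\hat V_i\subseteq\{1,\dots,K\}$ for the support of the quotient row $\hat v_i$ and $P_{i}=\hat V_0\cup\dots\cup \hat V_i$, we have $\mathrm{jaccard}(P_{i-1},\hat V_i)=|P_{i-1}\cap \hat V_i|/|P_{i-1}\cup \hat V_i|\ge\tau$ for every $1\le i\le h-1$. Let $\lambda_0=|\hat V_0|$ be the number of nonzeros of the (quotient) first row and $\lambda=|P_{h-1}|$ the number of nonzeros of the final pattern. If $\lambda\le \lambda_0/(1-\tau/2)$, then the density $\rho_G$ of $G$ after removing empty columns is at least $\tau/(2\Delta_W)$.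
   Context: Quotient row: given the column partition $Q=\{Q_1,\dots,Q_K\}$, the $Q$-quotient of a row $v$ is the binary vector $\hat v\in\{0,1\}^K$ with $\hat v_j=1$ iff $v$ has at least one nonzero entry in a column of $Q_j$. The 1-SA algorithm processes rows in order; when it meets a row not yet assigned to a group it opens a new group whose pattern is that row's quotient; it then scans later unassigned rows and, whenever the merge condition holds between the current pattern and a row's quotient, assigns the row to the group and replaces the pattern by the bitwise OR of the pattern and the row's quotient. Here the merge condition includes that the Jaccard similarity (of supports) between the current pattern and the new quotient row is at least $\tau$. Density of $G$ after removing empty columns: let $C$ be the union of the column groups $Q_j$ with $j\in P_{h-1}$; $\rho_G$ is the number of nonzero entries of $A$ in rows $v_0,\dots,v_{h-1}$ and columns in $C$, divided by $h\cdot|C|$. (For $\Delta_W=1$ this is the density of the $h\times\lambda$ submatrix on the columns containing at least one nonzero of the group.) *)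

(* Defs.v *)
From HB Require Import structures.
From mathcomp Require Import all_boot all_order all_algebra.
Set Implicit Arguments. Unset Strict Implicit. Unset Printing Implicit Defensive.
Import Order.TTheory GRing.Theory Num.Theory.
Local Open Scope ring_scope.

(* Column partition encoded by q : 'I_n -> 'I_K  (column j lies in group Q_(q j)). *)

Definition quot_supp (F : zmodType) (m n K : nat) (A : 'M[F]_(m, n))
  (q : 'I_n -> 'I_K) (r : 'I_m) : {set 'I_K} :=
  [set k | [exists j : 'I_n, (q j == k) && (A r j != 0)]].

Definition pattern (F : zmodType) (m n K : nat) (A : 'M[F]_(m, n))
  (q : 'I_n -> 'I_K) (v : nat -> 'I_m) (i : nat) : {set 'I_K} :=
  \bigcup_(l < i.+1) quot_supp A q (v l).

Definition jaccard (R : realFieldType) (K : nat) (S T : {set 'I_K}) : R :=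
  (#|S :&: T|)%:R / (#|S :|: T|)%:R.

Definition group_cols (F : zmodType) (m n K : nat) (A : 'M[F]_(m, n))
  (q : 'I_n -> 'I_K) (v : nat -> 'I_m) (h : nat) : {set 'I_n} :=
  [set j | q j \in pattern A q v h.-1].

Definition group_density (R : realFieldType) (F : zmodType) (m n K : nat)
  (A : 'M[F]_(m, n)) (q : 'I_n -> 'I_K) (v : nat -> 'I_m) (h : nat) : R :=
  (\sum_(i < h) #|[set j in group_cols A q v h | A (v i) j != 0%R]|)%:R
  / (h * #|group_cols A q v h|)%:R.

(* Main.v *)
Require Import Defs.
From HB Require Import structures.
From mathcomp Require Import all_boot all_order all_algebra.
From mathcomp Require Import lra.
Import Order.TTheory GRing.Theory Num.Theory.
Local Open Scope ring_scope.
Lemma cols_bound (F : zmodType) (m n K : nat) (A : 'M[F]_(m, n))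
  (q : 'I_n -> 'I_K) (v : nat -> 'I_m) (h DW : nat) :
  (forall k : 'I_K, (#|[set j | q j == k]| <= DW)%N) ->
  (#|group_cols A q v h| <= #|pattern A q v h.-1| * DW)%N.
Proof.
move=> HDW.
rewrite -sum1_card (partition_big q (mem (pattern A q v h.-1))); last first.
  by move=> j; rewrite inE.
rewrite -sum_nat_const leq_sum // => k _.
apply: leq_trans (HDW k).
rewrite -sum1_card.
apply: (@leq_trans (\sum_(j | q j == k) 1)%N).
  by rewrite big_mkcond [X in (_ <= X)%N]big_mkcond leq_sum // => j _; case: (j \in _); case: (q j == k).
by rewrite (eq_bigl (fun j => j \in [set j | q j == k])) // => j; rewrite inE.
Qed.

Lemma V_sub (F : zmodType) (m n K : nat) (A : 'M[F]_(m, n))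
  (q : 'I_n -> 'I_K) (v : nat -> 'I_m) (h i : nat) :
  (i < h)%N -> quot_supp A q (v i) \subset pattern A q v h.-1.
Proof.
move=> ih; have ih' : (i < h.-1.+1)%N by rewrite prednK //; apply: leq_ltn_trans ih.
exact: (bigcup_sup (Ordinal ih')).
Qed.

Lemma V_card (F : zmodType) (m n K : nat) (A : 'M[F]_(m, n))
  (q : 'I_n -> 'I_K) (v : nat -> 'I_m) (h i : nat) :
  (i < h)%N -> (#|quot_supp A q (v i)| <= #|[set j in group_cols A q v h | A (v i) j != 0%R]|)%N.
Proof.
move=> ih; apply: leq_trans (leq_imset_card q _); apply: subset_leq_card.
apply/subsetP => k kV.
have kP := subsetP (@V_sub _ _ _ _ A q v h i ih) k kV.
move: kV; rewrite inE => /existsP [j /andP [/eqP qj Aj]].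
apply/imsetP; exists j => //; rewrite !inE Aj andbT qj //.
Qed.

Theorem theorem1 (R : realFieldType) (F : zmodType) (m n K : nat)
  (A : 'M[F]_(m, n)) (q : 'I_n -> 'I_K) (DW : nat) (tau : R)
  (h : nat) (v : nat -> 'I_m) :
  (* consecutive column groups Q_k = [set j | q j == k], nonempty, width <= DW *)
  {homo q : j1 j2 / (j1 <= j2)%N} ->
  (forall k : 'I_K, exists j : 'I_n, q j = k) ->
  (forall k : 'I_K, (#|[set j | q j == k]| <= DW)%N) ->
  0 < tau <= 1 ->
  (* G consists of h distinct rows v 0, ..., v (h-1) of A, first row nonzero *)
  (0 < h)%N ->
  {in gtn h &, injective v} ->
  (0 < #|quot_supp A q (v 0%N)|)%N ->
  (* 1-SA merge condition *)
  (forall i : nat, (1 <= i < h)%N ->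
     tau <= jaccard R (pattern A q v i.-1) (quot_supp A q (v i))) ->
  (* lambda <= lambda_0 / (1 - tau/2) *)
  (#|pattern A q v h.-1|)%:R
    <= (#|quot_supp A q (v 0%N)|)%:R / (1 - tau / 2) ->
  tau / (2 * DW%:R) <= group_density R A q v h.
Proof.
move=> _ _ HDW /andP [t0 t1] h0 _ L00 Hj HL.
set L := #|pattern A q v h.-1| in HL.
set L0 := #|quot_supp A q (v 0%N)| in HL L00.
have L0L : (L0 <= L)%N by apply: subset_leq_card; exact: (@V_sub _ _ _ _ A q v h 0 h0).
have ht : 0 < 1 - tau / 2 by lra.
have HL' : (L%:R : R) * (1 - tau / 2) <= L0%:R by rewrite -ler_pdivlMr.
have L0pos : (0 : R) < L0%:R by rewrite ltr0n.
have HLR : (L%:R : R) / 2 <= L0%:R.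
  have : (0:R) <= L%:R by [].
  move=> ?; nra.
have Vi : forall i, (i < h)%N -> tau * (L%:R) / 2 <= (#|quot_supp A q (v i)|)%:R.
  move=> [|i] ih.
    rewrite -/L0; nra.
  have := Hj i.+1 ih; rewrite /jaccard /=.
  set P := pattern A q v i.
  set V := quot_supp A q (v i.+1).
  have b0 : (L0 <= #|P :|: V|)%N.
    apply: subset_leq_card; apply: subset_trans (subsetUl _ _).
    exact: (bigcup_sup (@ord0 i)).
  have bpos : (0 : R) < #|P :|: V|%:R by rewrite ltr0n; apply: leq_trans b0.
  have b0R : (L0%:R : R) <= #|P :|: V|%:R by rewrite ler_nat.
  have aV : (#|P :&: V|%:R : R) <= #|V|%:R by rewrite ler_nat subset_leq_card // subsetIr.
  rewrite ler_pdivlMr // => H.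
  nra.
set c := #|group_cols A q v h|.
set N := (\sum_(i < h) #|[set j in group_cols A q v h | A (v i) j != 0%R]|)%N.
have cL : (c <= L * DW)%N by exact: cols_bound.
have cpos : (0 < c)%N.
  apply: leq_trans L00 _; apply: leq_trans (@V_card _ _ _ _ A q v h 0 h0) _.
  by apply: subset_leq_card; apply/subsetP => j; rewrite inE => /andP [].
have NR : (h%:R : R) * (tau * L%:R / 2) <= N%:R.
  rewrite /N natr_sum mulr_natl -[in X in X <= _](card_ord h) -sumr_const.
  apply: ler_sum => i _.
  apply: le_trans (Vi i (ltn_ord i)) _.
  by rewrite ler_nat; apply: V_card.
rewrite /group_density -/c -/N.
case: DW HDW cL => [|DW] HDW cL.
  by rewrite mulr0 invr0 mulr0 divr_ge0.
have hcpos : (0 : R) < (h * c)%:R by rewrite ltr0n muln_gt0 h0 cpos.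
rewrite ler_pdivlMr // mulrAC ler_pdivrMr ?mulr_gt0 ?ltr0n //.
have cLR : (c%:R : R) <= L%:R * DW.+1%:R by rewrite -natrM ler_nat.
rewrite natrM.
have hp : (0 : R) < h%:R by rewrite ltr0n.
have th : 0 <= tau * h%:R by nra.
have D0 : (0:R) <= DW.+1%:R by [].
nra.
Qed.
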